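(* Let $A$ be a linear matrix of the form $\begin{bmatrix} C_n\\ F\end{bmatrix}$. If $g=g(A)<n$, then there exists a matrix $F'$ consisting of $h\ge1$ rows of $F$ such that $\begin{bmatrix} C_n\\ F'\end{bmatrix}$ contains a submatrix congruent to $C_g$ as an up-matrix.
   Context: A $\{0,1\}$-matrix is linear if it has no $2\times2$ submatrix with all entries $1$. Matrices are congruent if one is obtained from the other by permuting rows and columns. $C_n$ is the $n\times n$ matrix with $c_{i,j}=1$ iff $j\in\{i,i+1\}$ (indices mod $n$). For a $\{0,1\}$-matrix $A$, $g(A)=\infty$ if $A$ contains no submatrix congruent to $C_k$ for odd $k$, and otherwise $g(A)$ is the least odd $k$ such that $A$ has a submatrix congruent to $C_k$. The up-matrix $M^\uparrow$ of $M$ is the row submatrix consisting of the rows $r$ for which no other row $r'\neq r$ satisfies $r\le r'$ componentwise. A matrix $M$ contains $N$ as an up-matrix if for some set $S$ of columns, the up-matrix of the column submatrix of $M$ on $S$ equals $N$. *)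

(* Defs.v *)
(* {0,1}-matrices are boolean matrices 'M[bool]_(r,c). *)
From mathcomp Require Import all_boot all_order all_algebra.
Set Implicit Arguments. Unset Strict Implicit. Unset Printing Implicit Defensive.

Definition Cmat (n : nat) : 'M[bool]_n :=
  \matrix_(i < n, j < n) ((j == i :> nat) || (j == (i.+1 %% n) :> nat)).

Definition linear_mx (r c : nat) (M : 'M[bool]_(r, c)) : Prop :=
  forall (i1 i2 : 'I_r) (j1 j2 : 'I_c), i1 != i2 -> j1 != j2 ->
    ~~ [&& M i1 j1, M i1 j2, M i2 j1 & M i2 j2].

(* M has a submatrix congruent to N (rows/columns chosen injectively,
   which absorbs the permutations of rows and columns) *)
Definition has_congr_sub (r c p q : nat) (M : 'M[bool]_(r, c))
  (N : 'M[bool]_(p, q)) : Prop :=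
  exists (f : 'I_p -> 'I_r) (g : 'I_q -> 'I_c),
    injective f /\ injective g /\ forall i j, M (f i) (g j) = N i j.

Definition is_g (r c : nat) (A : 'M[bool]_(r, c)) (k : nat) : Prop :=
  [/\ odd k, 3 <= k, has_congr_sub A (Cmat k) &
      forall k', odd k' -> 3 <= k' -> k' < k -> ~ has_congr_sub A (Cmat k')].

Definition dominated (r c : nat) (M : 'M[bool]_(r, c)) (S : {set 'I_c})
  (i i' : 'I_r) : bool :=
  [forall j in S, M i j ==> M i' j] && [exists j in S, M i j != M i' j].

Definition up_rows (r c : nat) (M : 'M[bool]_(r, c)) (S : {set 'I_c}) :
  {set 'I_r} := [set i | ~~ [exists i', dominated M S i i']].

Definition contains_up_congr (r c p q : nat) (M : 'M[bool]_(r, c))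
  (N : 'M[bool]_(p, q)) : Prop :=
  exists (S : {set 'I_c}) (f : 'I_p -> 'I_r) (g : 'I_q -> 'I_c),
    [/\ injective f, injective g, f @: setT = up_rows M S, g @: setT = S &
        forall i j, M (f i) (g j) = N i j].

(* Main.v *)
Require Import Defs.
From mathcomp Require Import all_boot all_order all_algebra.
From mathcomp Require Import zify.
Set Implicit Arguments. Unset Strict Implicit. Unset Printing Implicit Defensive.

Lemma CmatE n (i j : 'I_n) : Cmat n i j = (j == i :> nat) || (j == i.+1 %% n :> nat).
Proof. by rewrite /Cmat mxE. Qed.

Lemma modD_eq k t i j : i < k -> j < k -> ((t + i) %% k == (t + j) %% k) = (i == j).
Proof. by move=> hi hj; have := eqn_modDl t i j k; rewrite (modn_small hi) (modn_small hj) => ->. Qed.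

Definition md k (kpos : 0 < k) (v : nat) : 'I_k := Ordinal (ltn_pmod v kpos).

Lemma sub_cycle N n k (A : 'M[bool]_(N, n)) (f0 : 'I_k -> 'I_N) (g0 : 'I_k -> 'I_n)
  (r : 'I_N) (t L : nat) :
  injective f0 -> injective g0 -> (forall i j, A (f0 i) (g0 j) = Cmat k i j) ->
  (forall x, f0 x != r) -> t < k -> 2 <= L <= k ->
  (forall c : 'I_k, A r (g0 c) = (c == t :> nat) || (c == (t + L.-1) %% k :> nat)) ->
  has_congr_sub A (Cmat L).
Proof.
move=> f0i g0i Hfg Hr tk /andP [L2 Lk] Hrc.
have kpos : 0 < k by lia.
pose g' (j : 'I_L) := g0 (md kpos (t + j)).
pose f' (i : 'I_L) := if i < L.-1 then f0 (md kpos (t + i)) else r.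
exists f', g'; split; [|split].
- move=> i j; rewrite /f'.
  case: ifP => hi; case: ifP => hj.
  + move/f0i/(congr1 val) => /= /eqP; rewrite modD_eq; [|lia|lia].
    by move/eqP/val_inj.
  + by move=> e; have := Hr (md kpos (t + i)); rewrite e eqxx.
  + by move=> e; have := Hr (md kpos (t + j)); rewrite e eqxx.
  + move=> _; apply/val_inj => /=; have := negbT hi; have := negbT hj; have := ltn_ord i; have := ltn_ord j; lia.
- move=> i j /g0i/(congr1 val) => /= /eqP; rewrite modD_eq; [|have := ltn_ord i; lia|have := ltn_ord j; lia].
  by move/eqP/val_inj.
- move=> i j; rewrite /f' /g'; case: ifP => hi.
  + rewrite Hfg !CmatE /= -(addn1 (_ %% k)) modnDml -addnA addn1.
    have ji := ltn_ord j; have ii := ltn_ord i.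
    rewrite modD_eq; [|lia|lia]. rewrite modD_eq; [|lia|lia].
    by rewrite (modn_small (m := i.+1)); last lia.
  + rewrite Hrc CmatE /=.
    have ji := ltn_ord j; have ii := ltn_ord i.
    have := negbT hi => hi'.
    have -> : i = L.-1 :> nat by lia.
    rewrite -{2}(modn_small tk) -{2}(addn0 t) modD_eq; [|lia|lia].
    rewrite modD_eq; [|lia|lia].
    have -> : L.-1.+1 = L by lia.
    by rewrite modnn orbC.
Qed.

Lemma chord_lt N n k (A : 'M[bool]_(N, n)) (f0 : 'I_k -> 'I_N) (g0 : 'I_k -> 'I_n)
  (r : 'I_N) (a b : 'I_k) :
  injective f0 -> injective g0 -> (forall i j, A (f0 i) (g0 j) = Cmat k i j) ->
  linear_mx A -> odd k ->
  (forall k', odd k' -> 3 <= k' -> k' < k -> ~ has_congr_sub A (Cmat k')) ->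
  (forall x, f0 x != r) -> a < b ->
  (forall c, A r (g0 c) = (c == a) || (c == b)) -> False.
Proof.
move=> f0i g0i Hfg lin kodd kmin Hr ab Hrc.
have bk := ltn_ord b.
have Hab : g0 a != g0 b by apply/eqP => /g0i e; move: ab; rewrite e ltnn.
have Ra : A r (g0 a) by rewrite Hrc eqxx.
have Rb : A r (g0 b) by rewrite Hrc eqxx orbT.
have [adj|nadj] := boolP ((b == a.+1 :> nat) || ((a == 0 :> nat) && (b == k.-1 :> nat))).
  case/orP: adj => [/eqP e | /andP [/eqP a0 /eqP bk1]].
    have := lin (f0 a) r (g0 a) (g0 b) (Hr a) Hab.
    by rewrite !Hfg Ra Rb !CmatE eqxx /= e modn_small ?eqxx //; lia.
  have := lin (f0 b) r (g0 a) (g0 b) (Hr b) Hab.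
  rewrite !Hfg Ra Rb !CmatE eqxx /= a0 bk1.
  have -> : k.-1.+1 = k by lia.
  by rewrite modnn orbT.
pose d := b - a.
have [dodd|deven] := boolP (odd d).
- (* second arc, starting at b, length k - d + 1 *)
  apply: (kmin (k - d).+1).
  + have : odd k = odd (k - d) (+) odd d by rewrite -oddD subnK //; lia.
    by rewrite kodd dodd /=; case: (odd (k - d)).
  + move: nadj; rewrite negb_or negb_and; lia.
  + move: nadj; rewrite negb_or negb_and; lia.
  apply: (sub_cycle (t := b) f0i g0i Hfg Hr) => //.
    move: nadj; rewrite negb_or negb_and; lia.
  move=> c; rewrite Hrc /=.
  have -> : b + (k - d) = a + k by lia.
  by rewrite modnDr modn_small // orbC.
- apply: (kmin d.+1).
  + by rewrite /= deven.
  + move: nadj; rewrite negb_or negb_and; lia.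
  + move: nadj; rewrite negb_or negb_and; lia.
  apply: (sub_cycle (t := a) f0i g0i Hfg Hr) => //.
    move: nadj; rewrite negb_or negb_and; lia.
  move=> c; rewrite Hrc /=.
  have -> : (a + d) = b by lia.
  by rewrite modn_small.
Qed.

Lemma chord N n k (A : 'M[bool]_(N, n)) (f0 : 'I_k -> 'I_N) (g0 : 'I_k -> 'I_n)
  (r : 'I_N) (a b : 'I_k) :
  injective f0 -> injective g0 -> (forall i j, A (f0 i) (g0 j) = Cmat k i j) ->
  linear_mx A -> odd k ->
  (forall k', odd k' -> 3 <= k' -> k' < k -> ~ has_congr_sub A (Cmat k')) ->
  (forall x, f0 x != r) -> a != b ->
  (forall c, A r (g0 c) = (c == a) || (c == b)) -> False.
Proof.
move=> f0i g0i Hfg lin kodd kmin Hr ab Hrc.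
case: (ltngtP a b) => h.
- exact: (chord_lt f0i g0i Hfg lin kodd kmin Hr h Hrc).
- apply: (chord_lt f0i g0i Hfg lin kodd kmin Hr h) => c; by rewrite Hrc orbC.
- by move: ab; rewrite (val_inj h) eqxx.
Qed.

Lemma succ_neq n i : 1 < n -> i < n -> (i == i.+1 %% n) = false.
Proof.
move=> n1 ilt; case: (ltngtP i.+1 n) => h.
- rewrite modn_small //; lia.
- lia.
- rewrite h modnn; lia.
Qed.

Lemma ordS_neq k (x : 'I_k) : 1 < k -> (x == ordS x) = false.
Proof. by move=> k1; rewrite -val_eqE /= succ_neq. Qed.

Lemma iter_ordS n (c : 'I_n) j : val (iter j (@ordS n) c) = (c + j) %% n.
Proof.
elim: j => [|j IH] /=; first by rewrite addn0 modn_small.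
by rewrite IH addnS -addn1 modnDml addn1.
Qed.

Lemma not_all_cycle N n k (A : 'M[bool]_(N, n)) (f0 : 'I_k -> 'I_N) (g0 : 'I_k -> 'I_n)
  (p : 'I_k -> 'I_n) :
  injective p -> injective g0 -> (forall x c, A (f0 x) c = Cmat n (p x) c) ->
  (forall i j, A (f0 i) (g0 j) = Cmat k i j) -> 2 < k -> k < n -> False.
Proof.
move=> pi g0i Hp Hfg k2 kn.
pose S := g0 @: setT.
have H1 : forall x, (p x \in S) && (ordS (p x) \in S).
  move=> x.
  have e1 := Hfg x x; have e2 := Hfg x (ordS x).
  rewrite Hp !CmatE eqxx /= in e1.
  rewrite Hp !CmatE /= eqxx orbT in e2.
  have hne : g0 x != g0 (ordS x) by apply/eqP => /g0i/eqP; rewrite ordS_neq //; lia.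
  have E1 : (g0 x == p x) || (g0 x == ordS (p x)) by [].
  have E2 : (g0 (ordS x) == p x) || (g0 (ordS x) == ordS (p x)) by [].
  have inS : forall y, g0 y \in S by move=> y; apply: imset_f.
  case/orP: E1 => /eqP E1; case/orP: E2 => /eqP E2.
  + by move: hne; rewrite E1 E2 eqxx.
  + by rewrite -E2 -E1 !inS.
  + by rewrite -E1 -E2 !inS.
  + by move: hne; rewrite E1 E2 eqxx.
have PS : p @: setT = S.
  apply/eqP; rewrite eqEcard; apply/andP; split.
    by apply/subsetP => c /imsetP [x _ ->]; case/andP: (H1 x).
  by rewrite !card_imset.
have cl : forall c, c \in S -> ordS c \in S.
  by move=> c; rewrite -{1}PS => /imsetP [x _ ->]; case/andP: (H1 x).
have kpos : 0 < k by lia.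
pose c0 := g0 (Ordinal kpos).
have c0S : c0 \in S by apply: imset_f.
have itS : forall j, iter j (@ordS n) c0 \in S.
  by elim=> [|j IH] //=; apply: cl.
have ST : S = setT.
  apply/setP => d; rewrite inE.
  have -> : d = iter (d + n - c0) (@ordS n) c0.
    apply/val_inj; rewrite iter_ordS.
    have -> : c0 + (d + n - c0) = d + n by have := ltn_ord c0; lia.
    by rewrite modnDr modn_small.
  exact: itS.
have : #|S| = n by rewrite ST cardsT card_ord.
rewrite card_imset // cardsT card_ord; lia.
Qed.

Theorem lemma4 (n m : nat) (F : 'M[bool]_(m, n)) (k : nat) :
  linear_mx (col_mx (Cmat n) F) ->
  is_g (col_mx (Cmat n) F) k ->
  k < n ->
  exists h : nat, 0 < h /\
    exists s : 'I_h -> 'I_m, injective s /\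
      contains_up_congr (col_mx (Cmat n) (rowsub s F)) (Cmat k).
Proof.
move=> lin [kodd k3 [f0 [g0 [f0i [g0i Hfg]]]] kmin] kn.
have kpos : 0 < k by lia.
have n1 : 1 < n by lia.
have Arow : forall (i : 'I_n) c, col_mx (Cmat n) F (lshift m i) c = Cmat n i c.
  by move=> i c; rewrite col_mxEu.
pose J := [set j : 'I_m | [exists x, f0 x == rshift n j]].
have J0 : 0 < #|J|.
  rewrite lt0n; apply/negP => /eqP /cards0_eq J0.
  pose p x := match split (f0 x) with inl i => i | inr _ => g0 x end.
  have Hp : forall x, f0 x = lshift m (p x).
    move=> x; rewrite /p -{1}(splitK (f0 x)).
    case e: (split (f0 x)) => [i|j] //=.
    have : j \in J.
      by rewrite inE; apply/existsP; exists x; rewrite -{1}(splitK (f0 x)) e.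
    by rewrite J0 inE.
  apply: (@not_all_cycle _ _ _ (col_mx (Cmat n) F) f0 g0 p) => //.
  - by move=> x y e; apply: f0i; rewrite !Hp e.
  - by move=> x c; rewrite Hp Arow.
exists #|J|; split => //.
exists (@enum_val _ (pred_of_set J)); split; first exact: enum_val_inj.
set s := @enum_val _ (pred_of_set J).
pose phi (r : 'I_(n + #|J|)) : 'I_(n + m) :=
  match split r with inl i => lshift m i | inr j => rshift n (s j) end.
have phiE : forall u, phi (unsplit u) =
    unsplit (match u with inl i => inl i | inr j => inr (s j) end).
  by case=> i; rewrite /phi unsplitK.
have HM : forall r c, col_mx (Cmat n) (rowsub s F) r c = col_mx (Cmat n) F (phi r) c.
  move=> r c; rewrite -(splitK r) phiE; case: (split r) => i /=.
    by rewrite !col_mxEu.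
  by rewrite !col_mxEd mxE.
have phii : injective phi.
  move=> r1 r2; rewrite -(splitK r1) -(splitK r2) !phiE.
  case: (split r1) => [i1|j1]; case: (split r2) => [i2|j2] /(can_inj unsplitK) //.
  - by case=> ->.
  - by case=> /enum_val_inj ->.
have Hcod : forall x, f0 x \in codom phi.
  move=> x; apply/codomP; case e : (split (f0 x)) => [i|j].
    by exists (unsplit (inl i)); rewrite phiE -e splitK.
  have jJ : j \in J.
    by rewrite inE; apply/existsP; exists x; rewrite -(splitK (f0 x)) e.
  exists (unsplit (inr (enum_rank_in jJ j))).
  by rewrite phiE /= /s (enum_rankK_in jJ jJ) -[f0 x](splitK (f0 x)) e.
pose f' x := iinv (Hcod x).
have Hf' : forall x, phi (f' x) = f0 x by move=> x; exact: f_iinv.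
have Hphi_r : forall j, exists x, f0 x = phi (unsplit (inr j)).
  move=> j; have := enum_valP j; rewrite inE => /existsP [x /eqP e].
  by exists x; rewrite phiE e.
exists (g0 @: setT), f', g0; split => //.
- by move=> x y e; apply: f0i; rewrite -!Hf' e.
- apply/setP => r; rewrite inE; apply/idP/idP.
  + case/imsetP => x _ ->.
    apply/negP => /existsP [r' /andP [/forallP Hall /existsP [c /andP [cS Hc]]]].
    have a1 := Hall (g0 x).
    rewrite (imset_f _ (in_setT x)) !HM Hf' Hfg CmatE eqxx /= in a1.
    have a2 := Hall (g0 (ordS x)).
    rewrite (imset_f _ (in_setT (ordS x))) !HM Hf' Hfg CmatE /= eqxx orbT /= in a2.
    rewrite !HM Hf' in Hc.
    have [e|ne] := eqVneq (f0 x) (phi r').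
      by move: Hc; rewrite e eqxx.
    have hne : g0 x != g0 (ordS x).
      by apply/eqP => /g0i/eqP; rewrite ordS_neq //; lia.
    have := lin _ _ _ _ ne hne.
    by rewrite !Hfg a1 a2 !CmatE eqxx /= eqxx orbT.
  + move=> Hnd; case: (boolP (r \in f' @: setT)) => // Hr; exfalso.
    move/negP: Hnd; apply.
    have Hr0 : forall x, f0 x != phi r.
      move=> x; apply/eqP => e; move/negP: Hr; apply.
      by apply/imsetP; exists x => //; apply: phii; rewrite Hf'.
    have [i Hi] : exists i, phi r = lshift m i.
      case e : (split r) => [i|j].
        by exists i; rewrite -(splitK r) e phiE.
      have [x Hx] := Hphi_r j.
      by have := Hr0 x; rewrite Hx -e splitK eqxx.
    have HA : forall c, col_mx (Cmat n) (rowsub s F) r c = (c == i) || (c == ordS i).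
      by move=> c; rewrite HM Hi Arow CmatE.
    have dom : forall a, (forall y, col_mx (Cmat n) (rowsub s F) r (g0 y) -> y = a) ->
        [exists r', dominated (col_mx (Cmat n) (rowsub s F)) (g0 @: setT) r r'].
      move=> a Ha; apply/existsP; exists (f' a); apply/andP; split.
      - apply/forallP => c; apply/implyP => /imsetP [y _ ->]; apply/implyP => /Ha ->.
        by rewrite HM Hf' Hfg CmatE eqxx.
      - apply/existsP; exists (g0 (ordS a)); rewrite imset_f //=.
        rewrite [X in _ != X]HM Hf' Hfg CmatE /= eqxx orbT.
        case h : (col_mx (Cmat n) (rowsub s F) r (g0 (ordS a))) => //.
        by have := Ha _ h; move/eqP; rewrite eq_sym ordS_neq //; lia.
    have hiS : (i == ordS i) = false by rewrite ordS_neq.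
    case: (boolP [exists a, g0 a == i]) => [/existsP [a /eqP ha] | na];
    case: (boolP [exists b, g0 b == ordS i]) => [/existsP [b /eqP hb] | nb].
    * exfalso; apply: (chord f0i g0i Hfg lin kodd kmin Hr0 (a := a) (b := b)).
        by apply/eqP => eab; move: hiS; rewrite -hb -ha eab eqxx.
      by move=> c; rewrite -HM HA -hb -ha !(inj_eq g0i).
    * apply: (dom a) => y; rewrite HA => /orP [/eqP|/eqP] e.
        by apply: g0i; rewrite e ha.
      by move/negP: nb; case; apply/existsP; exists y; rewrite e.
    * apply: (dom b) => y; rewrite HA => /orP [/eqP|/eqP] e.
        by move/negP: na; case; apply/existsP; exists y; rewrite e.
      by apply: g0i; rewrite e hb.
    * apply: (dom (Ordinal kpos)) => y; rewrite HA => /orP [/eqP|/eqP] e.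
        by move/negP: na; case; apply/existsP; exists y; rewrite e.
      by move/negP: nb; case; apply/existsP; exists y; rewrite e.
- by move=> i j; rewrite HM Hf' Hfg.
Qed.
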